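(* Let $(X(t))_{t\ge 0}$ be a reversible irreducible continuous-time Markov chain on a finite state space $\Omega$ with semigroup $P_t$ and stationary distribution $\pi$. Define \[ d^H(t):=\max_{x\in\Omega}\sqrt{\sum_{y\in\Omega}\Big(\sqrt{P_t(x,y)}-\sqrt{\pi(y)}\Big)^2}. \] Then for every $t\ge 0$, \[ d^H(2t)\le 7\,\big(d^H(t)\big)^{5/4}. \] *)

(* Defs.v *)
From HB Require Import structures.
From mathcomp Require Import all_boot all_order all_algebra.
From mathcomp Require Import all_classical all_reals all_analysis.
Set Implicit Arguments. Unset Strict Implicit. Unset Printing Implicit Defensive.
Import Order.TTheory GRing.Theory Num.Theory.
Local Open Scope ring_scope.

(* State space Omega = 'I_n.+1 (finite, nonempty). A continuous-time Markov
   chain is given by its generator (rate) matrix Q. *)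
Definition is_generator (R : realType) (n : nat) (Q : 'M[R]_n.+1) : Prop :=
  (forall x y, x != y -> 0 <= Q x y) /\ (forall x, \sum_y Q x y = 0).

Definition irreducible (R : realType) (n : nat) (Q : 'M[R]_n.+1) : Prop :=
  forall x y, connect (fun a b => (a != b) && (0 < Q a b)) x y.

Definition is_distribution (R : realType) (n : nat) (pi : 'I_n.+1 -> R) : Prop :=
  (forall x, 0 <= pi x) /\ \sum_x pi x = 1.

Definition stationary (R : realType) (n : nat) (Q : 'M[R]_n.+1) (pi : 'I_n.+1 -> R) : Prop :=
  forall y, \sum_x pi x * Q x y = 0.

Definition reversible (R : realType) (n : nat) (Q : 'M[R]_n.+1) (pi : 'I_n.+1 -> R) : Prop :=
  forall x y, pi x * Q x y = pi y * Q y x.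

Definition semigroup (R : realType) (n : nat) (Q : 'M[R]_n.+1) (t : R)
  (x y : 'I_n.+1) : R :=
  limn (fun N : nat => \sum_(k < N) (t ^+ k / (k`!)%:R) * (Q ^+ k) x y).

Definition dH (R : realType) (n : nat) (Q : 'M[R]_n.+1) (pi : 'I_n.+1 -> R) (t : R) : R :=
  \big[Num.max/0]_(x : 'I_n.+1)
     Num.sqrt (\sum_(y : 'I_n.+1)
        (Num.sqrt (semigroup Q t x y) - Num.sqrt (pi y)) ^+ 2).

(* Main.v *)
Require Import Defs.
From HB Require Import structures.
From mathcomp Require Import all_boot all_order all_algebra.
From mathcomp Require Import all_classical all_reals all_analysis.
From mathcomp Require Import ring lra zify.
Import Order.TTheory GRing.Theory Num.Theory numFieldNormedType.Exports.
Local Open Scope ring_scope.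
Local Open Scope classical_set_scope.
Lemma tri_sum (V : nmodType) (f : nat -> nat -> V) (N M : nat) : (N <= M)%N ->
  \sum_(k < N) \sum_(i < k.+1) f (k - i)%N i =
  \sum_(i < M) \sum_(j < M | (i + j < N)%N) f i j.
Proof.
elim: N => [|N IH] hNM.
  by rewrite big_ord0 big1 // => i _; rewrite big_pred0.
rewrite big_ord_recr /= IH ?(ltnW hNM) //.
have -> : \sum_(i < M) \sum_(j < M | (i + j < N.+1)%N) f i j =
   \sum_(i < M) (\sum_(j < M | (i + j < N)%N) f i j
               + \sum_(j < M | (i + j == N)%N) f i j).
  apply: eq_bigr => i _; rewrite (bigID (fun j : 'I_M => (i + j < N)%N)) /=.
  congr (_ + _); apply: eq_bigl => j; case: (ltngtP (i + j) N) => h;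
    rewrite ?h ?andbT ?andbF //=; lia.
rewrite big_split /=; congr (_ + _).
rewrite (eq_bigr (fun i : 'I_M => \sum_(j < M) if (i + j == N)%N then f i j else 0));
  last by move=> i _; rewrite big_mkcond.
rewrite exchange_big /=.
rewrite (big_ord_widen _ (fun j => f (N - j)%N j) hNM) big_mkcond /=.
apply: eq_bigr => j _.
case: (ltnP j N.+1) => hj.
  have hi : (N - j < M)%N by lia.
  rewrite (bigD1 (Ordinal hi)) //= big1 ?addr0.
    by rewrite ifT //; apply/eqP; lia.
  move=> i hi'; case: ifP => // /eqP h; exfalso; move/negP: hi'; apply.
  by apply/eqP/val_inj => /=; lia.
by rewrite big1 // => i _; rewrite ifF //; apply/negbTE; apply/eqP; lia.
Qed.
Lemma coefC (R : realType) (k i : nat) : (i <= k)%N ->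
  (k`!%:R)^-1 * 'C(k, i)%:R = ((k - i)`!%:R)^-1 * (i`!%:R)^-1 :> R.
Proof.
move=> hik; have h := bin_fact hik.
have h' : ('C(k, i)%:R * (i`!%:R * (k - i)`!%:R) = k`!%:R :> R).
  by rewrite -!natrM h.
have h1 : (i`!%:R : R) != 0 by rewrite pnatr_eq0 -lt0n fact_gt0.
have h2 : ((k - i)`!%:R : R) != 0 by rewrite pnatr_eq0 -lt0n fact_gt0.
rewrite -h'; field; by rewrite h1 h2 pnatr_eq0 -lt0n bin_gt0 hik.
Qed.

Lemma expS_split (R : realType) (V : algType R) (x y : V) (N M : nat) :
  GRing.comm x y -> (N <= M)%N ->
  \sum_(k < N) (k`!%:R)^-1 *: (x + y) ^+ k =
  \sum_(i < M) \sum_(j < M | (i + j < N)%N)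
     ((i`!%:R)^-1 * (j`!%:R)^-1) *: (x ^+ i * y ^+ j).
Proof.
move=> hc hNM; rewrite -(@tri_sum V (fun i j => ((i`!%:R)^-1 * (j`!%:R)^-1) *: (x ^+ i * y ^+ j)) N M hNM).
apply: eq_bigr => k _; rewrite exprDn_comm // scaler_sumr; apply: eq_bigr => i _.
by rewrite -scalerMnr scalerMnl -mulr_natr coefC // -ltnS.
Qed.
Definition mxn (R : realType) (m : nat) (A : 'M[R]_m.+1) : R :=
  \sum_i \sum_j `|A i j|.
Arguments mxn {R m}.

Lemma mxn_ge0 {R : realType} {m : nat} (A : 'M[R]_m.+1) : 0 <= mxn A.
Proof. by apply: sumr_ge0 => i _; apply: sumr_ge0. Qed.

Lemma le_sum1 (R : realType) (I : finType) (F : I -> R) (i : I) :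
  (forall j, 0 <= F j) -> F i <= \sum_j F j.
Proof.
move=> h; rewrite (bigD1 i) //= lerDl; exact: sumr_ge0.
Qed.
Arguments le_sum1 {R I}.

Lemma entry_le {R : realType} {m : nat} (A : 'M[R]_m.+1) i j : `|A i j| <= mxn A.
Proof.
apply: (le_trans (le_sum1 (fun j => `|A i j|) j _)) => //.
apply: (le_sum1 (fun i => \sum_j `|A i j|) i) => k; exact: sumr_ge0.
Qed.

Lemma mxn1 (R : realType) (m : nat) : mxn (1 : 'M[R]_m.+1) = m.+1%:R.
Proof.
rewrite /mxn (eq_bigr (fun _ => 1)) ?sumr_const ?card_ord //.
move=> i _; rewrite (bigD1 i) //= big1 ?addr0.
  by rewrite mxE eqxx normr1.
by move=> j hj; rewrite mxE eq_sym (negbTE hj) normr0.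
Qed.

Lemma mxnM {R : realType} {m : nat} (A B : 'M[R]_m.+1) : mxn (A * B) <= mxn A * mxn B.
Proof.
rewrite /mxn -mulmxE.
apply: (@le_trans _ _ (\sum_i \sum_j \sum_z `|A i z| * `|B z j|)).
  apply: ler_sum => i _; apply: ler_sum => j _; rewrite mxE.
  by apply: (le_trans (ler_norm_sum _ _ _)); apply: ler_sum => z _; rewrite normrM.
rewrite mulr_suml; apply: ler_sum => i _.
rewrite exchange_big /= mulr_suml; apply: ler_sum => z _.
rewrite -mulr_sumr; apply: ler_wpM2l => //.
apply: (le_sum1 (fun z => \sum_j `|B z j|) z) => k; exact: sumr_ge0.
Qed.

Lemma mxnX {R : realType} {m : nat} (A : 'M[R]_m.+1) k :
  mxn (A ^+ k) <= m.+1%:R * mxn A ^+ k.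
Proof.
elim: k => [|k IH]; first by rewrite !expr0 mxn1 mulr1.
rewrite exprSr (le_trans (mxnM _ _)) // exprSr mulrA ler_wpM2r ?mxn_ge0 //.
Qed.
Definition expS {R : realType} {m : nat} (A : 'M[R]_m.+1) (N : nat) : 'M[R]_m.+1 :=
  \sum_(k < N) (k`!%:R)^-1 *: A ^+ k.

Definition expM {R : realType} {m : nat} (A : 'M[R]_m.+1) : 'M[R]_m.+1 :=
  \matrix_(i, j) limn (fun N => expS A N i j).

Lemma expS_entry {R : realType} {m : nat} (A : 'M[R]_m.+1) N i j :
  expS A N i j = series (fun k => (k`!%:R)^-1 * (A ^+ k) i j) N.
Proof.
by rewrite /expS seriesEord /= summxE; apply: eq_bigr => k _; rewrite mxE.
Qed.

Lemma expS_cvg {R : realType} {m : nat} (A : 'M[R]_m.+1) i j :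
  cvgn (fun N => expS A N i j).
Proof.
rewrite (_ : (fun N => _) = series (fun k => (k`!%:R)^-1 * (A ^+ k) i j));
  last by apply/funext => N; rewrite expS_entry.
apply: normed_cvg.
apply: (@series_le_cvg _ _ (fun k => m.+1%:R * exp_coeff (mxn A) k)).
- by move=> k; rewrite /= normr_ge0.
- by move=> k; rewrite mulr_ge0 // exp_coeff_ge0 // mxn_ge0.
- move=> k /=; rewrite normrM ger0_norm ?invr_ge0 //.
  rewrite /exp_coeff /= mulrA [leRHS]mulrC ler_wpM2l ?invr_ge0 //.
  exact: (le_trans (entry_le _ i j) (mxnX _ _)).
- rewrite (_ : (fun k => _) = m.+1%:R *: exp_coeff (mxn A)) //.
  exact: is_cvg_seriesZ (is_cvg_series_exp_coeff _).
Qed.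

Lemma expM_cvg {R : realType} {m : nat} (A : 'M[R]_m.+1) i j :
  (fun N => expS A N i j) @ \oo --> expM A i j.
Proof. by rewrite mxE; exact: expS_cvg. Qed.
Lemma cvg_bigsum {R : realType} (I : eqType) (s : seq I) (f : I -> nat -> R) (l : I -> R) :
  (forall i, f i n @[n --> \oo] --> l i) ->
  (\sum_(i <- s) f i n) @[n --> \oo] --> \sum_(i <- s) l i.
Proof.
move=> h; elim: s => [|i s IH].
  rewrite big_nil (_ : (fun n => _) = (fun _ => 0)); first exact: cvg_cst.
  by apply/funext => n; rewrite big_nil.
rewrite big_cons (_ : (fun n => _) = (fun n => f i n + \sum_(j <- s) f j n)).
  exact: cvgD.
by apply/funext => n; rewrite big_cons.
Qed.

Lemma ler_sum_cond {R : realType} (I : finType) (P Q : pred I) (F : I -> R) :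
  (forall i, P i -> Q i) -> (forall i, Q i -> 0 <= F i) ->
  \sum_(i | P i) F i <= \sum_(i | Q i) F i.
Proof.
move=> hPQ hF; rewrite [leLHS]big_mkcond [leRHS]big_mkcond; apply: ler_sum => i _.
case: ifP => hP; first by rewrite hPQ.
by case: ifP => // hQ; apply: hF.
Qed.

Lemma ser_split (R : realType) (a b : R) (N M : nat) : (N <= M)%N ->
  series (exp_coeff (a + b)) N =
  \sum_(i < M) \sum_(j < M | (i + j < N)%N) ((i`!%:R)^-1 * (j`!%:R)^-1) * (a ^+ i * b ^+ j).
Proof.
move=> hNM; have := @expS_split R R^o a b N M (mulrC a b) hNM.
move=> <-; rewrite seriesEord /=; apply: eq_bigr => k _.
by rewrite /exp_coeff /= mulrC.
Qed.
Lemma expS_mul {R : realType} {m : nat} (A B : 'M[R]_m.+1) N :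
  expS A N * expS B N =
  \sum_(i < N) \sum_(j < N) ((i`!%:R)^-1 * (j`!%:R)^-1) *: (A ^+ i * B ^+ j).
Proof.
rewrite /expS mulr_suml; apply: eq_bigr => i _; rewrite mulr_sumr.
by apply: eq_bigr => j _; rewrite -scalerAl -scalerAr scalerA.
Qed.

Lemma expS_diff {R : realType} {m : nat} (A B : 'M[R]_m.+1) N : A * B = B * A ->
  expS A N * expS B N - expS (A + B) N =
  \sum_(i < N) \sum_(j < N | ~~ (i + j < N)%N)
     ((i`!%:R)^-1 * (j`!%:R)^-1) *: (A ^+ i * B ^+ j).
Proof.
move=> hc; rewrite expS_mul /expS (@expS_split R _ A B N N hc (leqnn N)) -sumrB.
apply: eq_bigr => i _.
by rewrite [X in X - _](bigID (fun j : 'I_N => (i + j < N)%N)) /= addrAC subrr add0r.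
Qed.

Lemma diff_bound {R : realType} {m : nat} (A B : 'M[R]_m.+1) N x y : A * B = B * A ->
  `|(expS A N * expS B N) x y - expS (A + B) N x y| <=
  m.+1%:R ^+ 2 * (expR (mxn A + mxn B) - series (exp_coeff (mxn A + mxn B)) N).
Proof.
move=> hc.
have -> : (expS A N * expS B N) x y - expS (A + B) N x y =
   (expS A N * expS B N - expS (A + B) N) x y by rewrite !mxE.
rewrite expS_diff //.
set a := mxn A; set b := mxn B.
set c := fun i : nat => ((i`!%:R)^-1 : R).
apply: (@le_trans _ _ (m.+1%:R ^+ 2 * \sum_(i < N) \sum_(j < N | ~~ (i + j < N)%N)
     (c i * c j) * (a ^+ i * b ^+ j))).
  rewrite summxE mulr_sumr; apply: (le_trans (ler_norm_sum _ _ _)).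
  apply: ler_sum => i _; rewrite summxE mulr_sumr; apply: (le_trans (ler_norm_sum _ _ _)).
  apply: ler_sum => j _; rewrite mxE normrM ger0_norm; last first.
    by apply: mulr_ge0; rewrite invr_ge0.
  rewrite mulrCA /c; apply: ler_wpM2l; first by apply: mulr_ge0; rewrite invr_ge0.
  apply: (le_trans (entry_le _ x y)); apply: (le_trans (mxnM _ _)).
  rewrite expr2 mulrACA.
  apply: ler_pM; [exact: mxn_ge0 | exact: mxn_ge0 | exact: mxnX | exact: mxnX].
apply: ler_wpM2l => //.
have hF : forall i j : nat, 0 <= c i * c j * (a ^+ i * b ^+ j).
  move=> i j; rewrite !mulr_ge0 ?invr_ge0 ?exprn_ge0 //; exact: mxn_ge0.
have hsplit : \sum_(i < N) \sum_(j < N | ~~ (i + j < N)%N) c i * c j * (a ^+ i * b ^+ j) =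
   \sum_(i < N) \sum_(j < N) c i * c j * (a ^+ i * b ^+ j) - series (exp_coeff (a + b)) N.
  rewrite (@ser_split R a b N N (leqnn N)) -sumrB; apply: eq_bigr => i _.
  by rewrite [X in X - _](bigID (fun j : 'I_N => (i + j < N)%N)) /= addrAC subrr add0r.
rewrite hsplit lerD2r.
apply: (@le_trans _ _ (series (exp_coeff (a + b)) N.*2)).
  rewrite (@ser_split R a b N.*2 N.*2 (leqnn N.*2)).
  rewrite (big_ord_widen _ (fun i => \sum_(j < N) c i * c j * (a ^+ i * b ^+ j)) (leq_addl N N)) -addnn.
  apply: (@le_trans _ _ (\sum_(i < N + N | (i < N)%N) \sum_(j < N + N | (i + j < N + N)%N) c i * c j * (a ^+ i * b ^+ j))).
    apply: ler_sum => i hi.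
    rewrite (big_ord_widen _ (fun j => c i * c j * (a ^+ i * b ^+ j)) (leq_addl N N)).
    apply: ler_sum_cond => j; [by move=> hj; lia | by move=> _; apply: hF].
  apply: ler_sum_cond => // i _; apply: sumr_ge0 => j _; exact: hF.
apply: nondecreasing_cvgn_le; last exact: is_cvg_series_exp_coeff.
move=> p q hpq; rewrite !seriesEnat.
apply: (nondecreasing_series (P := xpredT) (m := 0%N)) => // k _ _.
by rewrite /exp_coeff /= mulr_ge0 ?invr_ge0 // exprn_ge0 // addr_ge0 // mxn_ge0.
Qed.
Lemma expMD {R : realType} {m : nat} (A B : 'M[R]_m.+1) : A * B = B * A ->
  expM (A + B) = expM A * expM B.
Proof.
move=> hc; apply/matrixP => x y.
have h1 : (expS A N * expS B N) x y @[N --> \oo] --> (expM A * expM B) x y.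
  rewrite (_ : (fun N => _) = (fun N => \sum_z expS A N x z * expS B N z y)); last first.
    by apply/funext => N; rewrite -mulmxE mxE.
  rewrite -mulmxE mxE.
  apply: cvg_bigsum => z; apply: cvgM; exact: expM_cvg.
set e := expR (mxn A + mxn B).
set C := (m.+1%:R ^+ 2 : R).
have h3 : C * (e - series (exp_coeff (mxn A + mxn B)) N) @[N --> \oo] --> 0.
  rewrite -(mulr0 C) -(subrr e); apply: cvgMl_tmp; apply: cvgB; first exact: cvg_cst.
  exact: is_cvg_series_exp_coeff.
have h3' : - (C * (e - series (exp_coeff (mxn A + mxn B)) N)) @[N --> \oo] --> 0.
  rewrite -oppr0; exact: cvgN.
have h2 : ((expS A N * expS B N) x y - expS (A + B) N x y) @[N --> \oo] --> 0.
  apply: (squeeze_cvgr _ h3' h3); apply: nearW => N.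
  have := diff_bound A B N x y hc; rewrite -/e -/C => h.
  by rewrite -ler_norml.
rewrite mxE; apply: cvg_lim => //.
rewrite (_ : (fun N => _) = (fun N => (expS A N * expS B N) x y -
        ((expS A N * expS B N) x y - expS (A + B) N x y))); last first.
  by apply/funext => N; rewrite opprB addrCA subrr addr0.
rewrite -[X in _ --> X]subr0; exact: cvgB.
Qed.
Lemma semigroup_expM {R : realType} {n : nat} (Q : 'M[R]_n.+1) t x y :
  semigroup Q t x y = expM (t *: Q) x y.
Proof.
rewrite /semigroup mxE; congr (limn _); apply/funext => N.
rewrite /expS summxE; apply: eq_bigr => k _; rewrite !mxE exprZn mxE; ring.
Qed.

Lemma scalar_mxXn {R : realType} {m : nat} (a : R) k :
  ((a%:M : 'M[R]_m.+1) ^+ k) = (a ^+ k)%:M.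
Proof.
elim: k => [|k IH]; first by rewrite !expr0.
by rewrite exprS IH -mulmxE -scalar_mxM -exprS.
Qed.

Lemma expM_scalar {R : realType} {m : nat} (a : R) (i j : 'I_m.+1) :
  expM (a%:M : 'M[R]_m.+1) i j = expR a * (i == j)%:R.
Proof.
rewrite mxE.
have -> : (fun N => expS (a%:M : 'M[R]_m.+1) N i j) =
          (fun N => series (exp_coeff a) N * (i == j)%:R).
  apply/funext => N; rewrite /expS summxE seriesEord /= mulr_suml.
  apply: eq_bigr => k _; rewrite scalar_mxXn !mxE -[a ^+ k *+ _]mulr_natr /exp_coeff /=.
  by rewrite mulrA [_ * a ^+ k]mulrC.
case: (i == j); last first.
  have -> : (fun N => series (exp_coeff a) N * false%:R) = (fun _ => 0).
    by apply/funext => N; rewrite mulr0.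
  rewrite mulr0; apply: lim_near_cst => //; exact: nearW.
have -> : (fun N => series (exp_coeff a) N * true%:R) = series (exp_coeff a).
  by apply/funext => N; rewrite mulr1.
by rewrite mulr1.
Qed.

Lemma mx_pow_ge0 {R : realType} {m : nat} (A : 'M[R]_m.+1) k :
  (forall i j, 0 <= A i j) -> forall i j, 0 <= (A ^+ k) i j.
Proof.
move=> hA; elim: k => [|k IH] i j.
  by rewrite expr0 mxE; case: (i == j).
rewrite exprSr -mulmxE mxE; apply: sumr_ge0 => z _; exact: mulr_ge0.
Qed.

Lemma expM_ge0 {R : realType} {m : nat} (A : 'M[R]_m.+1) :
  (forall i j, 0 <= A i j) -> forall i j, 0 <= expM A i j.
Proof.
move=> hA i j; rewrite mxE; apply: limr_ge; first exact: expS_cvg.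
apply: nearW => N; rewrite /expS summxE; apply: sumr_ge0 => k _.
rewrite mxE mulr_ge0 ?invr_ge0 //; exact: mx_pow_ge0.
Qed.

Lemma mx_pow_rev {R : realType} {m : nat} (A : 'M[R]_m.+1) (p : 'I_m.+1 -> R) k :
  (forall x y, p x * A x y = p y * A y x) ->
  forall x y, p x * (A ^+ k) x y = p y * (A ^+ k) y x.
Proof.
move=> hA; elim: k => [|k IH] x y.
  rewrite expr0 !mxE eq_sym; case: eqP => [->|] //; by rewrite !mulr0.
rewrite {1}exprSr {1}exprS -!mulmxE !mxE !mulr_sumr; apply: eq_bigr => z _.
by rewrite mulrA IH -mulrA mulrCA hA; ring.
Qed.

Lemma expM_rev {R : realType} {m : nat} (A : 'M[R]_m.+1) (p : 'I_m.+1 -> R) :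
  (forall x y, p x * A x y = p y * A y x) ->
  forall x y, p x * expM A x y = p y * expM A y x.
Proof.
move=> hA x y.
have e : forall u v, p u * expM A u v = lim ((p u * expS A N u v) @[N --> \oo]).
  move=> u v; apply/esym; apply: cvg_lim => //; apply: cvgMl_tmp; exact: expM_cvg.
rewrite !e; congr (limn _); apply/funext => N.
rewrite /expS !summxE !mulr_sumr; apply: eq_bigr => k _; rewrite !mxE mulrCA.
by rewrite (mx_pow_rev _ _ k hA) mulrCA.
Qed.

Lemma mx_pow_rowsum {R : realType} {m : nat} (A : 'M[R]_m.+1) k :
  (forall x, \sum_y A x y = 0) -> forall x, \sum_y (A ^+ k) x y = (k == 0)%:R.
Proof.
move=> hA; elim: k => [|k IH] x.
  rewrite expr0 (bigD1 x) //= big1 ?mxE ?eqxx ?addr0 //.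
  by move=> y hy; rewrite mxE eq_sym (negbTE hy).
rewrite exprSr -mulmxE /=.
under eq_bigr do rewrite mxE.
rewrite exchange_big /=.
under eq_bigr do rewrite -mulr_sumr hA mulr0.
by rewrite big1.
Qed.

Lemma expM_rowsum {R : realType} {m : nat} (A : 'M[R]_m.+1) :
  (forall x, \sum_y A x y = 0) -> forall x, \sum_y expM A x y = 1.
Proof.
move=> hA x.
have h : (\sum_y expS A N x y) @[N --> \oo] --> \sum_y expM A x y.
  apply: cvg_bigsum => y; exact: expM_cvg.
rewrite -(cvg_lim _ h) //; apply: lim_near_cst => //.
near=> N.
have hN : (0 < N)%N by near: N; exact: nbhs_infty_gt.
rewrite /expS.
under eq_bigr do rewrite summxE.
rewrite exchange_big /= -(prednK hN) big_ord_recl /= [X in _ + X]big1 ?addr0.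
  under eq_bigr do rewrite mxE.
  by rewrite -mulr_sumr mx_pow_rowsum // fact0 invr1 mulr1.
move=> k _; under eq_bigr do rewrite mxE.
by rewrite -mulr_sumr mx_pow_rowsum // mulr0.
Unshelve. all: by end_near.
Qed.
Lemma pi_pos {R : realType} {n : nat} (Q : 'M[R]_n.+1) (pi : 'I_n.+1 -> R) :
  irreducible Q -> is_distribution pi -> reversible Q pi -> forall x, 0 < pi x.
Proof.
move=> hirr [hge hsum] hrev x.
rewrite lt_neqAle hge andbT; apply/eqP => h0.
have hall : forall a, pi a = 0.
  move=> a; have := hirr a x; move/connectP => [p hp hlast].
  elim: p a hp hlast => [|b p IH] a /=.
    by move=> _ <-; rewrite -h0.
  move=> /andP [/andP [hab hQ] hp] hlast.
  have hb := IH b hp hlast.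
  have : pi a * Q a b = 0 by rewrite hrev hb mul0r.
  move/eqP; rewrite mulf_eq0 => /orP [/eqP //|/eqP hq].
  by rewrite hq ltxx in hQ.
move: hsum; rewrite big1 // => /esym/eqP; by rewrite oner_eq0.
Qed.

Lemma CS {R : realType} (I : finType) (w f g : I -> R) : (forall i, 0 <= w i) ->
  (\sum_i w i * f i * g i) ^+ 2 <= (\sum_i w i * f i ^+ 2) * (\sum_i w i * g i ^+ 2).
Proof.
move=> hw.
set X := \sum_i w i * f i * g i.
set F := \sum_i w i * f i ^+ 2.
set G := \sum_i w i * g i ^+ 2.
have key : 0 <= \sum_i \sum_j w i * w j * (f i * g j - f j * g i) ^+ 2.
  apply: sumr_ge0 => i _; apply: sumr_ge0 => j _.
  by rewrite mulr_ge0 ?sqr_ge0 // mulr_ge0.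
have e1 : F * G = \sum_i \sum_j w i * f i ^+ 2 * (w j * g j ^+ 2).
  by rewrite mulr_suml; apply: eq_bigr => i _; rewrite mulr_sumr.
have e3 : F * G = \sum_i \sum_j w j * f j ^+ 2 * (w i * g i ^+ 2).
  by rewrite mulrC mulr_suml; apply: eq_bigr => i _; rewrite mulr_sumr; apply: eq_bigr => j _; rewrite mulrC.
have e2 : X ^+ 2 = \sum_i \sum_j w i * f i * g i * (w j * f j * g j).
  by rewrite expr2 mulr_suml; apply: eq_bigr => i _; rewrite mulr_sumr.
have eq : \sum_i \sum_j w i * w j * (f i * g j - f j * g i) ^+ 2 = 2 * (F * G - X ^+ 2).
  transitivity (\sum_i \sum_j (w i * f i ^+ 2 * (w j * g j ^+ 2) + w j * f j ^+ 2 * (w i * g i ^+ 2)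
      - 2 * (w i * f i * g i * (w j * f j * g j)))).
    by apply: eq_bigr => i _; apply: eq_bigr => j _; ring.
  under eq_bigr do rewrite sumrB big_split /=.
  have e4 : \sum_i \sum_j 2 * (w i * f i * g i * (w j * f j * g j)) = 2 * X ^+ 2.
    by rewrite e2 mulr_sumr; apply: eq_bigr => i _; rewrite mulr_sumr.
  rewrite sumrB big_split /= e4 -e1 -e3; ring.
rewrite -subr_ge0; move: key; rewrite eq pmulr_rge0 //.
Qed.

Lemma sqrt_bound {R : realType} (T s1 r : R) : 0 <= T -> 0 <= s1 -> 0 <= r ->
  `|T - 1| <= s1 + r -> (Num.sqrt T - 1) ^+ 2 <= 4 * s1 ^+ 2 + 2 * r.
Proof.
move=> hT hs1 hr hA.
set q := Num.sqrt T.
have hq : 0 <= q by exact: sqrtr_ge0.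
have hTq : T = q ^+ 2 by rewrite sqr_sqrtr.
have nK : forall z : R, `|z| ^+ 2 = z ^+ 2 by move=> z; rewrite real_normK // num_real.
have h1 : (q - 1) ^+ 2 <= (T - 1) ^+ 2.
  rewrite hTq; have -> : q ^+ 2 - 1 = (q - 1) * (q + 1) by ring.
  rewrite exprMn ler_peMr ?sqr_ge0 //; nra.
have h2 : (q - 1) ^+ 2 <= `|T - 1|.
  rewrite hTq; have -> : q ^+ 2 - 1 = (q - 1) * (q + 1) by ring.
  rewrite normrM (ger0_norm (_ : 0 <= q + 1)); last by lra.
  rewrite -nK expr2; apply: ler_wpM2l => //.
  by rewrite (le_trans (ler_normB _ _)) // normr1 ger0_norm.
case: (lerP `|T - 1| (2 * s1)) => hc.
  apply: (le_trans h1); rewrite -nK.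
  have : `|T - 1| ^+ 2 <= (2 * s1) ^+ 2 by rewrite lerXn2r // nnegrE // mulr_ge0.
  have e4 : (2:R) ^+ 2 = 4 by ring.
  move=> h; apply: (le_trans h); rewrite exprMn e4 lerDl mulr_ge0 //.
apply: (le_trans h2); have := sqr_ge0 s1; lra.
Qed.
Lemma eqle {R : realType} (x y : R) : x = y -> x <= y.
Proof. by move=> ->. Qed.

Lemma le_sqrt_d {R : realType} (X d : R) : 0 <= X -> 0 <= d -> X ^+ 2 <= d ^+ 2 -> X <= d.
Proof. move=> hX hd h; nra. Qed.

Lemma hell_main {R : realType} {n : nat} (P : 'M[R]_n.+1) (pi : 'I_n.+1 -> R) (d : R) :
  (forall x y, 0 <= P x y) -> (forall x, \sum_y P x y = 1) ->
  (forall x y, pi x * P x y = pi y * P y x) -> (forall x, 0 < pi x) -> \sum_x pi x = 1 ->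
  0 <= d -> (forall x, \sum_y (Num.sqrt (P x y) - Num.sqrt (pi y)) ^+ 2 <= d ^+ 2) ->
  forall x, \sum_y (Num.sqrt ((P * P) x y) - Num.sqrt (pi y)) ^+ 2 <= 8 * d ^+ 3 + 66 * d ^+ 4.
Proof.
move=> hP hrow hrev hpi hsum hd hH x.
set s := fun z => Num.sqrt (pi z).
have hs : forall z, 0 < s z by move=> z; rewrite sqrtr_gt0.
have hs0 : forall z, s z != 0 by move=> z; rewrite gt_eqF.
have hs2 : forall z, s z ^+ 2 = pi z by move=> z; rewrite sqr_sqrtr // ltW.
have hpi0 : forall z, pi z != 0 by move=> z; rewrite gt_eqF.
have hpige : forall z, 0 <= pi z by move=> z; rewrite ltW.
set a := fun x z => Num.sqrt (P x z) / s z.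
set u := fun x z => a x z - 1.
have ha2 : forall x z, pi z * a x z ^+ 2 = P x z.
  move=> y z; rewrite /a expr_div_n sqr_sqrtr // hs2; field; exact: hpi0.
have hsumA : forall y, \sum_z pi z * a y z ^+ 2 = 1.
  by move=> y; under eq_bigr do rewrite ha2; exact: hrow.
have hsu : forall y z, s y * u y z = Num.sqrt (P z y) - s y.
  move=> y z.
  have e : s y * Num.sqrt (P y z) = s z * Num.sqrt (P z y).
    by rewrite /s -!sqrtrM ?hpige // hrev.
  rewrite /u /a mulrBr mulr1 mulrA e; congr (_ - _); field; exact: hs0.
have hsux : forall y z, Num.sqrt (P y z) - s z = s z * u y z.
  move=> y z; rewrite /u /a mulrBr mulr1; congr (_ - _); field; exact: hs0.
have hHy : forall y, \sum_z pi z * u y z ^+ 2 <= d ^+ 2.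
  move=> y; rewrite (eq_bigr (fun z => (Num.sqrt (P y z) - s z) ^+ 2)); first exact: hH.
  by move=> z _; rewrite hsux exprMn hs2.
have hHx := hHy x.
have hc : forall z, \sum_y pi y * u y z ^+ 2 <= d ^+ 2.
  move=> z; rewrite (eq_bigr (fun y => (Num.sqrt (P z y) - s y) ^+ 2)); first exact: hH.
  by move=> y _; rewrite -hsu exprMn hs2.
have habs : forall g : 'I_n.+1 -> R, \sum_z pi z * g z ^+ 2 <= d ^+ 2 ->
    \sum_z pi z * `|g z| <= d.
  move=> g hg; apply: le_sqrt_d => //; first by apply: sumr_ge0 => z _; rewrite mulr_ge0.
  have e1 : \sum_z pi z * 1 * `|g z| = \sum_z pi z * `|g z|.
    by apply: eq_bigr => z _; rewrite mulr1.
  have e2 : \sum_z pi z * 1 ^+ 2 = 1.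
    by rewrite -[RHS]hsum; apply: eq_bigr => z _; rewrite expr1n mulr1.
  have e3 : \sum_z pi z * `|g z| ^+ 2 = \sum_z pi z * g z ^+ 2.
    by apply: eq_bigr => z _; rewrite real_normK // num_real.
  have h := CS _ pi (fun _ => 1) (fun z => `|g z|) hpige.
  rewrite -e1; apply: (le_trans h); by rewrite e2 e3 mul1r.
have hxy : forall y, (\sum_z pi z * u x z * u y z) ^+ 2 <= d ^+ 4.
  move=> y; apply: (le_trans (CS _ pi (u x) (u y) hpige)).
  rewrite (_ : d ^+ 4 = d ^+ 2 * d ^+ 2); last by rewrite -exprD.
  by apply: ler_pM; try exact: hHy; apply: sumr_ge0 => z _; rewrite mulr_ge0 // sqr_ge0.
set T := fun y => \sum_z pi z * a x z ^+ 2 * a y z ^+ 2.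
have hPzy : forall z y, P z y = pi y * a y z ^+ 2.
  by move=> z y; apply: (mulfI (hpi0 z)); rewrite hrev -(ha2 y z); ring.
have hP2 : forall y, (P * P) x y = pi y * T y.
  move=> y; rewrite -mulmxE mxE /T mulr_sumr; apply: eq_bigr => z _.
  rewrite (hPzy z y) -(ha2 x z); ring.
have hT0 : forall y, 0 <= T y.
  move=> y; apply: sumr_ge0 => z _; apply: mulr_ge0; [apply: mulr_ge0; [exact: hpige | exact: sqr_ge0] | exact: sqr_ge0].
have hA : forall y, T y - 1 = \sum_z pi z * ((a x z ^+ 2 - 1) * (a y z ^+ 2 - 1)).
  move=> y; transitivity (\sum_z (pi z * a x z ^+ 2 * a y z ^+ 2 - pi z * a x z ^+ 2
      - pi z * a y z ^+ 2 + pi z)); last by apply: eq_bigr => z _; ring.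
  by rewrite big_split /= !sumrB (hsumA x) (hsumA y) hsum /T; ring.
have h2abs : forall w : R, `|w ^+ 2| = w ^+ 2 by move=> w; rewrite ger0_norm // sqr_ge0.
set X := fun y => \sum_z pi z * u x z * u y z.
set r := fun y => \sum_z pi z * (2 * `|u x z| * u y z ^+ 2 + 2 * u x z ^+ 2 * `|u y z|
                                  + u x z ^+ 2 * u y z ^+ 2).
have hr0 : forall y, 0 <= r y.
  move=> y; apply: sumr_ge0 => z _; apply: mulr_ge0 => //.
  apply: addr_ge0; first apply: addr_ge0.
  - by apply: mulr_ge0; [apply: mulr_ge0 | exact: sqr_ge0].
  - by apply: mulr_ge0; [apply: mulr_ge0; [|exact: sqr_ge0] | ].
  - by apply: mulr_ge0; exact: sqr_ge0.
have hexp : forall y, `|T y - 1| <= 4 * `|X y| + r y.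
  move=> y; rewrite hA.
  have -> : \sum_z pi z * ((a x z ^+ 2 - 1) * (a y z ^+ 2 - 1)) =
     4 * X y + \sum_z pi z * (2 * u x z * u y z ^+ 2 + 2 * u x z ^+ 2 * u y z
                              + u x z ^+ 2 * u y z ^+ 2).
    rewrite /X mulr_sumr -big_split /=; apply: eq_bigr => z _; rewrite /u; ring.
  apply: (le_trans (ler_normD _ _)); rewrite normrM normr_nat; apply: lerD => //.
  apply: (le_trans (ler_norm_sum _ _ _)); apply: ler_sum => z _.
  rewrite normrM ger0_norm ?hpige //; apply: ler_wpM2l => //.
  apply: (le_trans (ler_normD _ _)); rewrite [X in _ + X <= _]ger0_norm; last first.
    by rewrite mulr_ge0 // sqr_ge0.
  apply: lerD => //; apply: (le_trans (ler_normD _ _)).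
  by rewrite !normrM normr_nat -!expr2 !real_normK ?num_real.
have hterm : forall y, (Num.sqrt ((P * P) x y) - s y) ^+ 2 = pi y * (Num.sqrt (T y) - 1) ^+ 2.
  move=> y; rewrite hP2 sqrtrM ?hpige // -/(s y).
  have -> : s y * Num.sqrt (T y) - s y = s y * (Num.sqrt (T y) - 1) by ring.
  by rewrite exprMn hs2.
have hbnd : forall y, (Num.sqrt (T y) - 1) ^+ 2 <= 64 * X y ^+ 2 + 2 * r y.
  move=> y; have h4 : 0 <= 4 * `|X y| by rewrite mulr_ge0.
  have := @sqrt_bound _ _ _ _ (hT0 y) h4 (hr0 y) (hexp y).
  move=> h; apply: (le_trans h).
  rewrite exprMn real_normK ?num_real //.
  have -> : 4 * ((4:R) ^+ 2 * X y ^+ 2) = 64 * X y ^+ 2 by ring.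
  by [].
apply: (@le_trans _ _ (\sum_y pi y * (64 * X y ^+ 2 + 2 * r y))).
  apply: ler_sum => y _; rewrite hterm; apply: ler_wpM2l => //; exact: hbnd.
have hXs : \sum_y pi y * X y ^+ 2 <= d ^+ 4.
  apply: (@le_trans _ _ (\sum_y pi y * d ^+ 4)).
    apply: ler_sum => y _; apply: ler_wpM2l => //; exact: hxy.
  by rewrite -mulr_suml hsum mul1r.
set c := fun z => \sum_y pi y * u y z ^+ 2.
set c1 := fun z => \sum_y pi y * `|u y z|.
have ec : \sum_y pi y * r y =
    \sum_z pi z * (2 * `|u x z| * c z + 2 * u x z ^+ 2 * c1 z + u x z ^+ 2 * c z).
  rewrite /r; under eq_bigr do rewrite mulr_sumr.
  rewrite exchange_big /=; apply: eq_bigr => z _.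
  rewrite /c /c1 !mulr_sumr -!big_split /= mulr_sumr; apply: eq_bigr => y _; ring.
have hc1 : forall z, c1 z <= d by move=> z; exact: (habs (fun y => u y z) (hc z)).
have hrs : \sum_y pi y * r y <= 4 * d ^+ 3 + d ^+ 4.
  rewrite ec.
  apply: (@le_trans _ _ (\sum_z pi z * (2 * `|u x z| * d ^+ 2 + 2 * u x z ^+ 2 * d
                                        + u x z ^+ 2 * d ^+ 2))).
    apply: ler_sum => z _; apply: ler_wpM2l => //.
    apply: lerD; first apply: lerD.
    - by apply: ler_wpM2l; [rewrite mulr_ge0 | exact: hc].
    - by apply: ler_wpM2l; [rewrite mulr_ge0 // sqr_ge0 | exact: hc1].
    - by apply: ler_wpM2l; [rewrite sqr_ge0 | exact: hc].
  have -> : \sum_z pi z * (2 * `|u x z| * d ^+ 2 + 2 * u x z ^+ 2 * d + u x z ^+ 2 * d ^+ 2)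
     = 2 * d ^+ 2 * \sum_z pi z * `|u x z| + (2 * d + d ^+ 2) * \sum_z pi z * u x z ^+ 2.
    rewrite !mulr_sumr -big_split /=; apply: eq_bigr => z _; ring.
  have h1 := habs (u x) hHx.
  have hs1 : 0 <= \sum_z pi z * `|u x z| by apply: sumr_ge0 => z _; rewrite mulr_ge0.
  have hs2' : 0 <= \sum_z pi z * u x z ^+ 2.
    by apply: sumr_ge0 => z _; rewrite mulr_ge0 // sqr_ge0.
  apply: (@le_trans _ _ (2 * d ^+ 2 * d + (2 * d + d ^+ 2) * d ^+ 2)).
    apply: lerD; apply: ler_wpM2l => //.
    - by rewrite mulr_ge0 // sqr_ge0.
    - by rewrite addr_ge0 // ?mulr_ge0 // sqr_ge0.
  by apply: eqle; ring.
have -> : \sum_y pi y * (64 * X y ^+ 2 + 2 * r y) =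
    64 * \sum_y pi y * X y ^+ 2 + 2 * \sum_y pi y * r y.
  by rewrite !mulr_sumr -big_split /=; apply: eq_bigr => y _; ring.
apply: (@le_trans _ _ (64 * d ^+ 4 + 2 * (4 * d ^+ 3 + d ^+ 4))).
  by apply: lerD; apply: ler_wpM2l.
by apply: eqle; ring.
Qed.
Lemma hell_le2 {R : realType} {n : nat} (p q : 'I_n.+1 -> R) :
  (forall y, 0 <= p y) -> (forall y, 0 <= q y) -> \sum_y p y = 1 -> \sum_y q y = 1 ->
  \sum_y (Num.sqrt (p y) - Num.sqrt (q y)) ^+ 2 <= 2.
Proof.
move=> hp hq sp sq.
apply: (@le_trans _ _ (\sum_y (p y + q y))).
  apply: ler_sum => y _.
  have h1 := sqrtr_ge0 (p y); have h2 := sqrtr_ge0 (q y).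
  have hp2 := sqr_sqrtr (hp y); have hq2 := sqr_sqrtr (hq y).
  move: h1 h2 hp2 hq2.
  set a := Num.sqrt (p y); set b := Num.sqrt (q y) => h1 h2 hp2 hq2.
  rewrite -hp2 -hq2; nra.
by rewrite big_split /= sp sq.
Qed.

Lemma final_num {R : realType} (d h : R) : 0 <= d -> 0 <= h -> h <= 2 ->
  h <= 8 * d ^+ 3 + 66 * d ^+ 4 -> h <= (7 * powR d (5 / 4)) ^+ 2.
Proof.
move=> hd hh h2 hb.
case: (eqVneq d 0) => [d0|dn0].
  move: hb; rewrite d0 expr0n /= expr0n /= !mulr0 addr0 => hb.
  apply: (le_trans hb); exact: sqr_ge0.
have dpos : 0 < d by rewrite lt_neqAle eq_sym dn0.
set q := powR d (1 / 4).
have hq : 0 < q by exact: powR_gt0.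
have hd4 : q ^+ 4 = d.
  rewrite /q -powR_mulrn ?ltW // -powRrM.
  have -> : (1 / 4 : R) * 4%:R = 1 by field.
  by rewrite powRr1.
have hd5 : powR d (5 / 4) = q ^+ 5.
  rewrite /q -powR_mulrn ?ltW // -powRrM.
  by congr (powR d _); field.
rewrite hd5.
have E1 : 8 * d ^+ 3 + 66 * d ^+ 4 = q ^+ 10 * (8 * q ^+ 2 + 66 * q ^+ 6).
  by rewrite -hd4; ring.
have E2 : (7 * q ^+ 5) ^+ 2 = 49 * q ^+ 10 by ring.
rewrite E2; rewrite E1 in hb.
have hq2 : 0 <= q ^+ 2 by exact: sqr_ge0.
have hq10 : 0 <= q ^+ 10 by rewrite exprn_ge0 // ltW.
case: (lerP (q ^+ 2) (3 / 5)) => hq35.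
  have h6 : q ^+ 6 <= 27 / 125.
    have -> : q ^+ 6 = (q ^+ 2) ^+ 3 by rewrite -exprM.
    have -> : (27 / 125 : R) = (3 / 5) ^+ 3 by field.
    apply: lerXn2r => //; rewrite nnegrE //.
  apply: (le_trans hb); rewrite mulrC; apply: ler_wpM2r => //.
  lra.
have h10 : 243 / 3125 <= q ^+ 10.
  have -> : q ^+ 10 = (q ^+ 2) ^+ 5 by rewrite -exprM.
  have -> : (243 / 3125 : R) = (3 / 5) ^+ 5 by field.
  apply: lerXn2r; rewrite ?nnegrE //; exact: ltW.
lra.
Qed.
Lemma dH_expM {R : realType} {n : nat} (Q : 'M[R]_n.+1) (pi : 'I_n.+1 -> R) s :
  dH Q pi s = \big[Num.max/0]_(x : 'I_n.+1)
     Num.sqrt (\sum_(y : 'I_n.+1) (Num.sqrt (expM (s *: Q) x y) - Num.sqrt (pi y)) ^+ 2).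
Proof.
rewrite /dH; apply: eq_bigr => x _; congr Num.sqrt; apply: eq_bigr => y _.
by rewrite semigroup_expM.
Qed.

Lemma bigmax_ge0 {R : realType} (I : finType) (F : I -> R) : 0 <= \big[Num.max/0]_i F i.
Proof.
elim/big_rec: _ => // i x _ hx; by rewrite le_max hx orbT.
Qed.

Local Close Scope classical_set_scope.

Theorem lemma2p3 (R : realType) (n : nat) (Q : 'M[R]_n.+1) (pi : 'I_n.+1 -> R)
  (hQ : is_generator Q) (hirr : irreducible Q)
  (hpi : is_distribution pi) (hstat : stationary Q pi) (hrev : reversible Q pi)
  (t : R) (ht : 0 <= t) :
  dH Q pi (2 * t) <= 7 * powR (dH Q pi t) (5 / 4).
Proof.
case: hQ => hoff hrow0.
have hpos := pi_pos Q pi hirr hpi hrev.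
case: (hpi) => hpige hsum.
set P := expM (t *: Q).
have hPge : forall x y, 0 <= P x y.
  set c := \sum_i `|Q i i|.
  have hc0 : 0 <= c by apply: sumr_ge0.
  set B := Q + c%:M.
  have hB : forall i j, 0 <= B i j.
    move=> i j; rewrite /B !mxE; case: (eqVneq i j) => [<-|hij].
      rewrite mulr1n; have := le_sum1 (fun i => `|Q i i|) i (fun _ => normr_ge0 _).
      rewrite -/c => h; have := ler_norm (- Q i i); rewrite normrN; lra.
    by rewrite mulr0n addr0; apply: hoff.
  have e : t *: Q = t *: B + (- (t * c))%:M.
    apply/matrixP => i j; rewrite /B !mxE; case: (i == j); rewrite /= ?mulr1n ?mulr0n; ring.
  have hcomm : (t *: B) * (- (t * c))%:M = (- (t * c))%:M * (t *: B).
    by rewrite -!mulmxE scalar_mxC.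
  move=> x y; rewrite /P e expMD // -mulmxE mxE; apply: sumr_ge0 => z _.
  apply: mulr_ge0.
    apply: expM_ge0 => i j; rewrite mxE; apply: mulr_ge0 => //.
  by rewrite expM_scalar mulr_ge0 // expR_ge0.
have hProw : forall x, \sum_y P x y = 1.
  apply: expM_rowsum => x; under eq_bigr do rewrite mxE.
  by rewrite -mulr_sumr hrow0 mulr0.
have hPrev : forall x y, pi x * P x y = pi y * P y x.
  apply: expM_rev => x y; rewrite !mxE mulrCA hrev mulrCA //.
set d := dH Q pi t.
have hd0 : 0 <= d by exact: bigmax_ge0.
have hHrow : forall x, \sum_y (Num.sqrt (P x y) - Num.sqrt (pi y)) ^+ 2 <= d ^+ 2.
  move=> x.
  have h : Num.sqrt (\sum_y (Num.sqrt (P x y) - Num.sqrt (pi y)) ^+ 2) <= d.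
    rewrite /d dH_expM -/P.
    exact: (le_bigmax _ (fun x => Num.sqrt (\sum_y (Num.sqrt (P x y) - Num.sqrt (pi y)) ^+ 2)) x).
  have hs0 : 0 <= \sum_y (Num.sqrt (P x y) - Num.sqrt (pi y)) ^+ 2.
    by apply: sumr_ge0 => y _; exact: sqr_ge0.
  rewrite -(sqr_sqrtr hs0); apply: lerXn2r => //; rewrite nnegrE ?sqrtr_ge0 //.
have hP2 : expM ((2 * t) *: Q) = P * P.
  rewrite (_ : (2 * t) *: Q = t *: Q + t *: Q); first by rewrite expMD.
  by rewrite -scalerDl; congr (_ *: _); ring.
have hP2ge : forall x y, 0 <= (P * P) x y.
  move=> x y; rewrite -mulmxE mxE; apply: sumr_ge0 => z _; exact: mulr_ge0.
have hP2row : forall x, \sum_y (P * P) x y = 1.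
  move=> x; under eq_bigr do rewrite -mulmxE mxE.
  rewrite exchange_big /=.
  under eq_bigr do rewrite -mulr_sumr hProw mulr1.
  exact: hProw.
rewrite dH_expM hP2.
apply/bigmax_leP; split.
  by rewrite mulr_ge0 // powR_ge0.
move=> x _.
have hB0 : 0 <= 7 * powR d (5 / 4) by rewrite mulr_ge0 // powR_ge0.
rewrite -(ger0_norm hB0) -sqrtr_sqr ler_sqrt ?sqr_ge0 //.
apply: final_num => //.
- by apply: sumr_ge0 => y _; exact: sqr_ge0.
- by apply: hell_le2 => //.
- have := @hell_main _ _ P pi d hPge hProw hPrev hpos hsum hd0 hHrow x. exact.
Qed.
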